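(* Let $A$ be a real $n\times n$ matrix acting on $H=\mathbb{R}^n$ (Euclidean inner product $\langle\cdot,\cdot\rangle$, norm $\|\cdot\|$) and let $\lambda$ be a real eigenvalue of $A$. Let $I\subset\mathbb{R}$ be an interval containing $0$ and let $\alpha,\beta:I\to\mathbb{R}$ be continuous, differentiable at $0$, and $u:I\to H$ continuous at $0$ with $\|u(t)\|=1$, such that for every $t\in I$, $$Au(t)=\alpha(t)u(t)^+-\beta(t)u(t)^-,$$ $\alpha(t)\neq\beta(t)$ for $t\neq 0$, $(\alpha(0),\beta(0))=(\lambda,\lambda)$ and $u(0)=u_0$. Then necessarily $u_0\in\operatorname{Ker}(A-\lambda I)$, $u_0\neq 0$, and $$\alpha'(0)\,\langle u_0^+,v\rangle=\beta'(0)\,\langle u_0^-,v\rangle\quad\text{for all } v\in\operatorname{Ker}(A^*-\lambda I).$$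
   Context: $A^*$ is the transpose of $A$. For $u\in\mathbb{R}^n$, $u^+$ and $u^-$ are defined componentwise by $u_i^+=\max\{u_i,0\}$, $u_i^-=\max\{-u_i,0\}$, so $u=u^+-u^-$. A pair $(\alpha,\beta)$ for which $Au=\alpha u^+-\beta u^-$ has a nontrivial solution belongs to the Fučík spectrum of $A$; $(\alpha(t),\beta(t))$ is a (continuous) Fučík curve with Fučík eigenvectors $u(t)$. *)

(* Defs.v *)
From HB Require Import structures.
From mathcomp Require Import all_boot all_order all_algebra.
From mathcomp Require Import all_classical all_reals all_analysis.
Set Implicit Arguments. Unset Strict Implicit. Unset Printing Implicit Defensive.
Import Order.TTheory GRing.Theory Num.Theory.
Import numFieldNormedType.Exports.
Local Open Scope classical_set_scope.
Local Open Scope ring_scope.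

Definition pos_part (R : realType) (n : nat) (u : 'cV[R]_n) : 'cV[R]_n :=
  map_mx (fun x => Num.max x 0) u.
Definition neg_part (R : realType) (n : nat) (u : 'cV[R]_n) : 'cV[R]_n :=
  map_mx (fun x => Num.max (- x) 0) u.

Definition dotv (R : realType) (n : nat) (u v : 'cV[R]_n) : R :=
  \sum_(i < n) u i 0 * v i 0.
Definition enorm (R : realType) (n : nat) (u : 'cV[R]_n) : R :=
  Num.sqrt (dotv u u).

(* f : I -> R has derivative df at x (relative to the set I, i.e. one-sided
   if x is an endpoint of I): the difference quotient tends to df as t -> x,
   t in I, t <> x. *)
Definition has_derivative_within (R : realType) (I : set R) (f : R -> R)
    (x df : R) : Prop :=
  (fun t => (f t - f x) / (t - x)) @ within (fun t => I t /\ t != x) (nbhs x)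
    --> df.

Definition real_eigenvalue (R : realType) (n : nat) (A : 'M[R]_n) (l : R) : Prop :=
  exists v : 'cV[R]_n, v != 0 /\ A *m v = l *: v.

(* Main.v *)
Require Import Defs.
From HB Require Import structures.
From mathcomp Require Import all_boot all_order all_algebra.
From mathcomp Require Import all_classical all_reals all_analysis.
From mathcomp Require Import ring lra.
Import Order.TTheory GRing.Theory Num.Theory.
Import numFieldNormedType.Exports.
Local Open Scope classical_set_scope.
Local Open Scope ring_scope.

Section S.
Variables (R : realType) (n : nat).

Lemma max0_cvg (T : Type) (F : set_system T) (FF : Filter F) (f : T -> R) a :
  f @ F --> a -> (fun t => Num.max (f t) 0) @ F --> Num.max a 0.
Proof.
move=> fa.
have e : forall x : R, Num.max x 0 = (x + 0 + `|x - 0|) / 2 by move=> x; rewrite -maxr_absE.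
under eq_cvg do rewrite e.
rewrite e.
apply: cvgMr_tmp; apply: cvgD; first exact: cvgD fa (cvg_cst _).
by apply: cvg_norm; apply: cvgB fa (cvg_cst _).
Qed.

Lemma dot_cvg (T : Type) (F : set_system T) (FF : Filter F) (u : T -> 'cV[R]_n) (u0 v : 'cV[R]_n)
   (g : R -> R) :
  u @ F --> u0 ->
  (forall (f : T -> R) a, f @ F --> a -> (fun t => g (f t)) @ F --> g a) ->
  (fun t => dotv (map_mx g (u t)) v) @ F --> dotv (map_mx g u0) v.
Proof.
move=> uc gc; rewrite /dotv.
under eq_cvg => t do under eq_bigr => i _ do rewrite mxE.
under eq_bigr => i _ do rewrite mxE.
apply: (@cvg_big R _ +%R 0 xpredT).
all: try exact: add_continuous.
all: try by [].
move=> i _; apply: cvgMr_tmp; apply: gc.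
apply: (@cvg_comp _ _ _ u (fun M : 'cV[R]_n => M i 0) F (nbhs u0) _ uc).
have h := (@coord_continuous R n 1 i 0 u0). exact h.
Qed.

Lemma dotv_mul (A : 'M[R]_n) (w v : 'cV[R]_n) :
  dotv (A *m w) v = dotv w (A^T *m v).
Proof.
rewrite /dotv.
under eq_bigr => i _ do rewrite mxE big_distrl /=.
under [RHS]eq_bigr => i _ do rewrite mxE big_distrr /=.
rewrite exchange_big /=; apply: eq_bigr => i _; apply: eq_bigr => j _.
rewrite mxE; ring.
Qed.

Lemma dotv_lin (a b : R) (x y v : 'cV[R]_n) :
  dotv (a *: x - b *: y) v = a * dotv x v - b * dotv y v.
Proof.
rewrite /dotv !mulr_sumr -sumrB; apply: eq_bigr => i _; rewrite !mxE.
by rewrite mulrBl !mulrA.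
Qed.

Lemma dotvZr (a : R) (x v : 'cV[R]_n) : dotv x (a *: v) = a * dotv x v.
Proof.
rewrite /dotv !mulr_sumr; apply: eq_bigr => i _; rewrite !mxE.
by rewrite mulrCA.
Qed.

Lemma dotv_pn (w v : 'cV[R]_n) :
  dotv w v = dotv (pos_part w) v - dotv (neg_part w) v.
Proof.
rewrite /dotv -sumrB; apply: eq_bigr => i _; rewrite !mxE -mulrBl.
congr (_ * _); set x := w i 0.
have [h|h] := leP 0 x.
  by rewrite max_r ?subr0 // oppr_le0.
have hx : 0 <= - x by rewrite oppr_ge0 ltW.
by rewrite max_l // sub0r opprK.
Qed.

Lemma proper_punct (I : set R) : is_interval I -> I 0 -> (exists t, I t /\ t != 0) ->
  ProperFilter (within (fun t => I t /\ t != 0) (nbhs (0:R))).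
Proof.
move=> iI I0 [t1 [It1 t10]]; apply: within_nbhs_proper.
move=> B /nbhs_ballP [e e0 sB].
have t1p : 0 < `|t1| by rewrite normr_gt0.
set c := Num.min 1 (e / (2 * `|t1|)).
have c0 : 0 < c by rewrite lt_min ltr01 divr_gt0 // mulr_gt0.
have c1 : c <= 1 by rewrite ge_min lexx.
have c2 : c <= e / (2 * `|t1|) by rewrite ge_min lexx orbT.
exists (c * t1); split; last first.
  apply: sB; rewrite /ball /= sub0r normrN normrM (gtr0_norm c0).
  have : c * `|t1| <= e / (2 * `|t1|) * `|t1| by rewrite ler_pM2r.
  have -> : e / (2 * `|t1|) * `|t1| = e / 2 by field; rewrite ?lt0r_neq0.
  move: e0 => /= e0; lra.
split; last by rewrite mulf_neq0 // lt0r_neq0.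
have [t1n|t1p'] := ltP t1 0.
  apply: (iI t1 0) => //; apply/andP; split; nra.
apply: (iI 0 t1) => //; apply/andP; split; nra.
Qed.

Lemma pn_mx (w : 'cV[R]_n) : pos_part w - neg_part w = w.
Proof.
apply/matrixP => i j; rewrite !mxE; set x := w i j.
have [h|h] := leP 0 x.
  by rewrite max_r ?subr0 // oppr_le0.
have hx : 0 <= - x by rewrite oppr_ge0 ltW.
by rewrite max_l // sub0r opprK.
Qed.
End S.

Theorem theorem2 (R : realType) (n : nat) (A : 'M[R]_n) (lambda : R)
    (I : set R) (alpha beta : R -> R) (u : R -> 'cV[R]_n) (u0 : 'cV[R]_n)
    (da db : R) :
  real_eigenvalue A lambda ->
  is_interval I -> I 0 -> (exists t, I t /\ t != 0) ->
  {within I, continuous alpha} -> {within I, continuous beta} ->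
  has_derivative_within I alpha 0 da ->
  has_derivative_within I beta 0 db ->
  u t @[t --> within I (nbhs 0)] --> u 0 ->
  (forall t, I t -> enorm (u t) = 1) ->
  (forall t, I t -> A *m u t = alpha t *: pos_part (u t) - beta t *: neg_part (u t)) ->
  (forall t, I t -> t != 0 -> alpha t != beta t) ->
  alpha 0 = lambda -> beta 0 = lambda -> u 0 = u0 ->
  [/\ A *m u0 = lambda *: u0, u0 != 0 &
      forall v : 'cV[R]_n, A^T *m v = lambda *: v ->
        da * dotv (pos_part u0) v = db * dotv (neg_part u0) v].
Proof.
move=> _ iI I0 ex _ _ hda hdb uc nu eq _ a0 b0 u0E.
split.
- by have := eq 0 I0; rewrite a0 b0 u0E -scalerBr pn_mx.
- apply/eqP => h; have := nu 0 I0; rewrite u0E h /enorm /dotv big1 ?sqrtr0.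
    by move/eqP; rewrite eq_sym oner_eq0.
  by move=> i _; rewrite mxE mul0r.
move=> v hv.
set a := fun t => dotv (pos_part (u t)) v.
set b := fun t => dotv (neg_part (u t)) v.
have key : forall t, I t -> (alpha t - alpha 0) * a t = (beta t - beta 0) * b t.
  move=> t It; have := congr1 (fun w => dotv w v) (eq t It).
  rewrite /= dotv_mul hv dotvZr dotv_lin (@dotv_pn _ _ (u t)) a0 b0 /a /b => h.
  rewrite !mulrBl; lra.
have PF := @proper_punct R I iI I0 ex.
set F := within (fun t => I t /\ t != 0) (nbhs (0:R)).
have ucF : u t @[t --> F] --> u 0.
  move=> P /uc; rewrite !nbhs_filterE /F /within /=.
  apply: filterS => x h [Ix _]; exact: h.
have aC : a t @[t --> F] --> a 0.
  apply: (@dot_cvg R n R F _ u (u 0) v ( fun x => Num.max x 0) ucF).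
  by move=> f c fc; apply: max0_cvg.
have bC : b t @[t --> F] --> b 0.
  apply: (@dot_cvg R n R F _ u (u 0) v ( fun x => Num.max (- x) 0) ucF).
  by move=> f c fc; apply: max0_cvg; apply: cvgN.
have h1 := cvgM hda aC.
have h2 := cvgM hdb bC.
have h1' : (fun t => (alpha t - alpha 0) / (t - 0) * a t) @ F --> db * b 0.
  have e : {near F, (fun t => (beta t - beta 0) / (t - 0) * b t) =1 (fun t => (alpha t - alpha 0) / (t - 0) * a t)}.
    apply: (@filterS _ F _ (fun t => I t /\ t != 0)); last exact: withinT.
    move=> t [It _].
    by rewrite /= mulrAC -key // mulrAC.
  apply: (cvg_trans (near_eq_cvg e)); exact: (h2 _).
have := cvg_unique (@Rhausdorff R) (h1 _) h1'.
rewrite /a /b u0E; apply; exact: filter_within.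
Qed.
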